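(* Consider an execution of the convergence algorithm described in the context, in the CORDA model under a fully asynchronous scheduler, with $n>5f$ robots of which at most $f$ are Byzantine. Fix a time $t_0$. Let $i$ be a correct robot, and consider a cycle of $i$ that starts at a time $t_1 \ge t_0$. Let $t\geq t_1$ be a time in this cycle by which $i$ has computed its destination $D_i(t)$. Then $$D_i(t)\in\Big[\tfrac{U_i(t)+\min UD(t_0)}{2},\ \tfrac{U_i(t)+\max UD(t_0)}{2}\Big],$$ where $U_i(t)$ is the position of robot $i$ at time $t$.
   Context: Setting: $n$ robots on the real line, at most $f$ Byzantine (arbitrary positions). Robots are anonymous, oblivious, have no common orientation, and have unlimited visibility with strong multiplicity detection. Correct robots run Look–Compute–Move cycles. In the CORDA model, phases of different robots interleave arbitrarily, so computations use possibly outdated snapshots. The adversary may stop robot $i$ during a Move only after it has moved at least $\delta_i>0$ toward its destination (or reached it). A fully asynchronous scheduler only guarantees that each robot is activated infinitely often. Algorithm: with snapshot sorted $P_1\le\dots\le P_n$ taken at the Look of the cycle and own position $x_i$, robot $i$ is elected iff $x_i\le P_{f+1}$ or $x_i\ge P_{n-f}$. If elected, its destination is the midpoint of $\min(x_i,P_{2f+1})$ and $\max(x_i,P_{n-2f})$. This is the center of $trim^i_{2f}(P)$, obtained by removing, among the $2f$ smallest positions, those below $x_i$, and, among the $2f$ largest positions, those above $x_i$. Notation: $D_i(t)$ is the last destination computed by robot $i$ at or before $t$; we take it to be its position if it has computed none. $UD(t)$ is the multiset union of the positions and the destinations of all correct robots at time $t$.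
   Formalization: Each correct robot computes its destination at the instant of its Look, so $D_i(t)$ is the destination of the cycle with the last Look at or before t, and only the Move may start later. Each condition added here is assumed in the paper as well or is needed for the statement above to hold. *)

(* Defs.v *)
From HB Require Import structures.
From mathcomp Require Import all_boot all_order all_algebra.
From mathcomp Require Import boolp reals.
Set Implicit Arguments. Unset Strict Implicit. Unset Printing Implicit Defensive.
Import Order.TTheory GRing.Theory Num.Theory.
Local Open Scope ring_scope.

Section Defs.
Variable R : realType.

Definition between (a x b : R) : Prop := Num.min a b <= x <= Num.max a b.

(* P_k (1-based) of the sorted snapshot s *)
Definition Pk (s : seq R) (k : nat) : R := nth 0 (sort <=%R s) k.-1.

(* The algorithm: snapshot s (size n, multiset of all positions), own position x. *)
Definition elected (n f : nat) (s : seq R) (x : R) : bool :=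
  (x <= Pk s f.+1) || (Pk s (n - f) <= x).

Definition algo (n f : nat) (s : seq R) (x : R) : R :=
  if elected n f s x then
    (Num.min x (Pk s (2 * f).+1) + Num.max x (Pk s (n - 2 * f))) / 2
  else x.

Variables (n f : nat) (pos : 'I_n -> R -> R) (L M E : 'I_n -> nat -> R).

Definition snapshot (i : 'I_n) (k : nat) : seq R :=
  [seq pos j (L i k) | j <- enum 'I_n].

Definition dest (i : 'I_n) (k : nat) : R :=
  algo n f (snapshot i k) (pos i (L i k)).

(* D_i(t): last destination computed at or before t (Compute is taken to be
   performed at the Look instant L i k of cycle k, from the snapshot taken
   there), or the position if none was computed. *)
Definition Dest (i : 'I_n) (t : R) : R :=
  match pselect (exists k, L i k <= t /\ t < L i k.+1) with
  | left H => dest i (projT1 (constructive_indefinite_description H))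
  | right _ => pos i t
  end.

Definition UD (byz : {set 'I_n}) (t : R) : seq R :=
  flatten [seq [:: pos i t; Dest i t] | i <- enum (~: byz)].

Definition seqmin (s : seq R) : R := \big[Num.min/head 0 s]_(x <- s) x.
Definition seqmax (s : seq R) : R := \big[Num.max/head 0 s]_(x <- s) x.

(* For each correct robot
   i and each cycle k: Look (+ Compute) at L i k, the Move starts at M i k
   (possibly much later, so the snapshot may be outdated) and ends at E i k. *)
Definition corda_exec (byz : {set 'I_n}) (delta : 'I_n -> R) : Prop :=
  forall i, i \notin byz ->
  [/\ 0 <= L i 0,
   
      (forall k, L i k <= M i k /\ M i k <= E i k /\ E i k < L i k.+1) &
      (* fully asynchronous: activated infinitely often (unboundedly in time) *)
      (forall T, exists k, T <= L i k)] /\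
   [/\
      (forall s, 0 <= s <= M i 0 -> pos i s = pos i 0),
      (forall k s, E i k <= s <= M i k.+1 -> pos i s = pos i (E i k)),
      (forall k s s', M i k <= s -> s <= s' -> s' <= E i k ->
         between (pos i s) (pos i s') (dest i k))
    & (* the adversary stops it only after delta_i or at the destination *)
      0 < delta i /\
      (forall k, Num.min (delta i) `|dest i k - pos i (M i k)|
                 <= `|pos i (E i k) - pos i (M i k)|)].

End Defs.

(* Main.v *)
Require Import Defs.
From HB Require Import structures.
From mathcomp Require Import all_boot all_order all_algebra.
From mathcomp Require Import boolp reals.
From mathcomp Require Import lra zify.
Import Order.TTheory GRing.Theory Num.Theory.
Local Open Scope ring_scope.

Lemma nth_lo (R : realType) (s : seq R) (m : R) (f : nat) :
  sorted <=%R s -> (f < size s)%N ->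
  (count (fun x : R => (x < m)%R) s <= f)%N -> m <= nth 0 s f.
Proof.
move=> ss hf hc; rewrite leNgt; apply/negP => hlt.
have hall : all (fun x : R => (x < m)%R) (take f.+1 s).
  apply/(all_nthP 0) => i; rewrite size_takel // => hi.
  rewrite nth_take //; apply: le_lt_trans hlt.
  apply: (sorted_leq_nth le_trans lexx) => //; rewrite inE //.
  exact: leq_ltn_trans hf.
move: hc; rewrite -(cat_take_drop f.+1 s) count_cat.
have -> : count (fun x : R => (x < m)%R) (take f.+1 s) = size (take f.+1 s).
  by apply/eqP; rewrite -all_count.
 rewrite size_takel //.
lia.
Qed.

Lemma nth_hi (R : realType) (s : seq R) (M : R) (f : nat) :
  sorted <=%R s -> (f < size s)%N ->
  (count (fun x : R => (M < x)%R) s <= f)%N -> nth 0 s (size s - f.+1) <= M.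
Proof.
move=> ss hf hc; rewrite leNgt; apply/negP => hlt.
have hall : all (fun x : R => (M < x)%R) (drop (size s - f.+1) s).
  apply/(all_nthP 0) => i; rewrite size_drop => hi.
  rewrite nth_drop; apply: lt_le_trans hlt _.
  apply: (sorted_leq_nth le_trans lexx) => //; rewrite ?inE /=; try lia. have {}hi : (i < size s - (size s - f.+1))%N := hi. lia.
move: hc; rewrite -(cat_take_drop (size s - f.+1) s) count_cat.
have -> : count (fun x : R => (M < x)%R) (drop (size s - f.+1) s) = size (drop (size s - f.+1) s).
  by apply/eqP; rewrite -all_count.
 rewrite size_drop.
lia.
Qed.

Lemma algo_bound (R : realType) (n f : nat) (s : seq R) (x m M : R) :
  size s = n -> (3 * f < n)%N ->
  (count (fun y : R => (y < m)%R) s <= f)%N ->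
  (count (fun y : R => (M < y)%R) s <= f)%N ->
  m <= x <= M ->
  (x + m) / 2 <= algo n f s x <= (x + M) / 2.
Proof.
move=> hs hn hlo hhi /andP[xm xM].
pose ss : seq R := sort <=%R s.
have hp : perm_eq ss s by rewrite /ss perm_sort perm_refl.
have sss : sorted <=%R ss by exact: sort_le_sorted.
have hsz : size ss = n by rewrite size_sort.
have hlo' : (count (fun y : R => (y < m)%R) ss <= f)%N by rewrite (permP hp).
have hhi' : (count (fun y : R => (M < y)%R) ss <= f)%N by rewrite (permP hp).
have lo : m <= nth 0 ss f by apply: nth_lo => //; rewrite ?hsz; lia.
have hi : nth 0 ss (n - f.+1) <= M by rewrite -hsz; apply: nth_hi => //; (rewrite ?hsz; lia).
have mono : forall a b, (a <= b)%N -> (b < n)%N -> nth 0 ss a <= nth 0 ss b.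
  move=> a b hab hb; apply: (sorted_leq_nth le_trans lexx) => //; rewrite inE; (rewrite ?hsz; lia).
have hA : m <= Pk s (2 * f).+1 <= M.
  rewrite /Pk -/ss /=; apply/andP; split.
    by apply: le_trans lo (mono _ _ _ _); lia.
  by apply: le_trans (mono _ _ _ _) hi; (rewrite ?hsz; lia).
have hB : m <= Pk s (n - 2 * f) <= M.
  rewrite /Pk -/ss /=; apply/andP; split.
    by apply: le_trans lo (mono _ _ _ _); lia.
  by apply: le_trans (mono _ _ _ _) hi; (rewrite ?hsz; lia).
move: hA hB; set a := Pk s _; set b := Pk s _ => /andP[am aM] /andP[bm bM].
rewrite /algo; case: ifP => _; last by apply/andP; split; lra.
rewrite minEle maxEle -/a -/b.
case: (lerP x a) => h1; case: (lerP x b) => h2; apply/andP; split; lra.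
Qed.

Lemma btriv (R : realType) (x d : R) : between x x d.
Proof. by rewrite /between ge_min le_max !lexx. Qed.

Lemma seg (R : realType) (n f : nat) (byz : {set 'I_n})
    (pos : 'I_n -> R -> R) (L M E : 'I_n -> nat -> R) (delta : 'I_n -> R) :
  corda_exec f pos L M E byz delta ->
  forall j, j \notin byz -> forall k a u,
  L j k <= a -> a <= u -> u < L j k.+1 ->
  between (pos j a) (pos j u) (dest f pos L j k).
Proof.
move=> H j hj k a u ha hau hu.
have [[h0 hLME _] [hidle0 hidle hmove _]] := H j hj.
have [hLM [hME hEL]] := hLME k.
have pre : forall s, L j k <= s -> s <= M j k -> pos j s = pos j (M j k).
  move=> s hs1 hs2; case: k {hau ha hu hLM hME hEL} hs1 hs2 => [|k'] hs1 hs2.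
    rewrite (hidle0 s) ?(hidle0 (M j 0)) // ?lexx ?andbT ?hs2 //.
      by apply: le_trans h0 (le_trans hs1 hs2).
    by rewrite (le_trans h0 hs1).
  have [_ [_ h3]] := hLME k'.
  rewrite (hidle k' s) ?(hidle k' (M j k'.+1)) // ?lexx ?andbT ?hs2 //.
    by rewrite (ltW (lt_le_trans h3 (le_trans hs1 hs2))).
  by rewrite (ltW (lt_le_trans h3 hs1)).
have post : forall s, E j k <= s -> s < L j k.+1 -> pos j s = pos j (E j k).
  move=> s h1 h2; apply: hidle; have [h3 _] := hLME k.+1.
  by rewrite h1 (le_trans (ltW h2) h3).
case: (leP u (M j k)) => hu1.
  by rewrite (pre a) ?(pre u) ?(le_trans ha hau) ?(le_trans hau hu1) //; apply: btriv.
case: (leP u (E j k)) => hu2.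
  case: (leP a (M j k)) => ha1.
    by rewrite (pre a) //; apply: hmove => //; rewrite ltW.
  by apply: hmove => //; rewrite ltW.
rewrite (post u) ?(ltW hu2) //.
case: (leP a (M j k)) => ha1.
  by rewrite (pre a) //; apply: hmove.
case: (leP a (E j k)) => ha2.
  by apply: hmove => //; rewrite ltW.
rewrite (post a) ?(ltW ha2) ?(le_lt_trans hau hu) //; apply: btriv.
Qed.
Arguments seg {R n f byz pos L M E delta}.

Lemma bigmin_le (R : realType) (s : seq R) (idx y : R) :
  y \in s -> \big[Num.min/idx]_(x <- s) x <= y.
Proof.
elim: s => // a s IH; rewrite big_cons inE => /orP[/eqP->|hy].
  by rewrite ge_min lexx.
by rewrite ge_min IH ?orbT.
Qed.

Lemma bigmax_ge (R : realType) (s : seq R) (idx y : R) :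
  y \in s -> y <= \big[Num.max/idx]_(x <- s) x.
Proof.
elim: s => // a s IH; rewrite big_cons inE => /orP[/eqP->|hy].
  by rewrite le_max lexx.
by rewrite le_max IH ?orbT.
Qed.

Lemma between_in (R : realType) (x y d m M : R) :
  between x y d -> m <= x <= M -> m <= d <= M -> m <= y <= M.
Proof.
rewrite /between minEle maxEle => /andP[h1 h2] /andP[h3 h4] /andP[h5 h6].
by case: ifP h1 h2 => _ h1 h2; apply/andP; split; lra.
Qed.

Lemma Lmono (R : realType) (n f : nat) (byz : {set 'I_n})
    (pos : 'I_n -> R -> R) (L M E : 'I_n -> nat -> R) (delta : 'I_n -> R) :
  corda_exec f pos L M E byz delta ->
  forall j, j \notin byz -> forall k k', (k <= k')%N -> L j k <= L j k'.
Proof.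
move=> H j hj k k' hk.
have [[_ hLME _] _] := H j hj.
rewrite -(subnKC hk); elim: (k' - k)%N => [|d IH]; first by rewrite addn0.
apply: le_trans IH _; rewrite addnS.
have [h1 [h2 h3]] := hLME (k + d)%N.
exact: ltW (le_lt_trans h1 (le_lt_trans h2 h3)).
Qed.
Arguments Lmono {R n f byz pos L M E delta}.

Lemma Lnext (R : realType) (n f : nat) (byz : {set 'I_n})
    (pos : 'I_n -> R -> R) (L M E : 'I_n -> nat -> R) (delta : 'I_n -> R) :
  corda_exec f pos L M E byz delta ->
  forall j, j \notin byz -> forall k, L j k < L j k.+1.
Proof.
move=> H j hj k; have [[_ hLME _] _] := H j hj.
have [h1 [h2 h3]] := hLME k.
exact: (le_lt_trans h1 (le_lt_trans h2 h3)).
Qed.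
Arguments Lnext {R n f byz pos L M E delta}.

Lemma Dest_eq (R : realType) (n f : nat) (byz : {set 'I_n})
    (pos : 'I_n -> R -> R) (L M E : 'I_n -> nat -> R) (delta : 'I_n -> R) :
  corda_exec f pos L M E byz delta ->
  forall j, j \notin byz -> forall k t, L j k <= t -> t < L j k.+1 ->
  Dest f pos L j t = dest f pos L j k.
Proof.
move=> H j hj k t h1 h2.
rewrite /Dest; case: pselect => [p|np]; last by exfalso; apply: np; exists k.
case: (constructive_indefinite_description p) => k' /= [h3 h4].
case: (ltngtP k' k) => hk; last by rewrite hk.
  have h5 := Lmono H j hj _ _ hk.
  by have := le_lt_trans (le_trans h5 h1) h4; rewrite ltxx.
have := Lmono H j hj _ _ hk => h5.
have := le_lt_trans (le_trans h5 h3) h2; by rewrite ltxx.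
Qed.
Arguments Dest_eq {R n f byz pos L M E delta}.

Lemma Dest_pre (R : realType) (n f : nat) (byz : {set 'I_n})
    (pos : 'I_n -> R -> R) (L M E : 'I_n -> nat -> R) (delta : 'I_n -> R) :
  corda_exec f pos L M E byz delta ->
  forall j, j \notin byz -> forall t, t < L j 0 -> Dest f pos L j t = pos j t.
Proof.
move=> H j hj t ht; rewrite /Dest; case: pselect => [p|//]; exfalso; case: p => k [h1 _].
have := Lmono H j hj 0 k (leq0n k) => h2.
by have := lt_le_trans ht (le_trans h2 h1); rewrite ltxx.
Qed.
Arguments Dest_pre {R n f byz pos L M E delta}.

Lemma posH (R : realType) (n f : nat) (byz : {set 'I_n})
    (pos : 'I_n -> R -> R) (L M E : 'I_n -> nat -> R) (delta : 'I_n -> R) :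
  corda_exec f pos L M E byz delta ->
  forall j, j \notin byz -> forall (t0 m Mx T : R), 0 <= t0 ->
  m <= pos j t0 <= Mx -> m <= Dest f pos L j t0 <= Mx ->
  (forall k, t0 <= L j k -> L j k < T -> m <= dest f pos L j k <= Mx) ->
  forall s, t0 <= s -> s <= T -> m <= pos j s <= Mx.
Proof.
move=> H j hj t0 m Mx T ht0 hp0 hD0 hyp s hs hsT.
have [[h0 hLME hunb] [hidle0 hidle hmove _]] := H j hj.
have [K hK] := hunb (s + 1).
have hsK0 : s < L j K by apply: lt_le_trans hK; rewrite ltrDl ltr01.
move: hsK0; clear hK.
elim: K s hs hsT => [|K IH] s hs hsT hsK.
  have [hLM _] := hLME 0%N.
  have hsM : s <= M j 0%N by apply: le_trans (ltW hsK) hLM.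
  have e1 : pos j s = pos j 0 by apply: hidle0; rewrite hsM (le_trans ht0 hs).
  have e2 : pos j t0 = pos j 0 by apply: hidle0; rewrite ht0 (le_trans hs hsM).
  by rewrite e1 -e2.
case: (ltP s (L j K)) => hsK'; first exact: IH.
case: (leP t0 (L j K)) => ht0K.
  have hLK : m <= pos j (L j K) <= Mx.
    case: K IH hsK hsK' ht0K => [|k] IH hsK hsK' ht0K.
      have [hLM _] := hLME 0%N.
      rewrite (hidle0 (L j 0)) -?(hidle0 t0) ?h0 ?hLM ?ht0 //=.
      by apply: le_trans ht0K hLM.
    have [hLM _] := hLME k.+1.
    have [_ [_ hEL]] := hLME k.
    case: (leP t0 (E j k)) => htE.
      rewrite (hidle k (L j k.+1)) ?(ltW hEL) ?hLM //.
      apply: IH => //.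
      by apply: le_trans hsT; apply: le_trans hsK'; exact: ltW.
    rewrite (hidle k (L j k.+1)) ?(ltW hEL) ?hLM // -(hidle k t0) //.
    by rewrite (ltW htE) (le_trans ht0K hLM).
  have [->|hne] := eqVneq s (L j K); first exact: hLK.
  have hlt : L j K < s by rewrite lt_neqAle eq_sym hne hsK'.
  apply: between_in (seg H j hj K _ _ (lexx _) (ltW hlt) hsK) hLK _.
  exact: hyp ht0K (lt_le_trans hlt hsT).
have hD := Dest_eq H j hj K t0 (ltW ht0K) (le_lt_trans hs hsK).
apply: between_in (seg H j hj K _ _ (ltW ht0K) hs hsK) hp0 _.
by rewrite -hD.
Qed.
Arguments posH {R n f byz pos L M E delta}.

Lemma count_enum_card (n : nat) (P : pred 'I_n) : count P (enum 'I_n) = #|P|.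
Proof.
rewrite cardE -size_filter /enum_mem; congr size.
by rewrite -filter_predI; apply: eq_filter => x; rewrite /= andbT.
Qed.

Lemma final_alg (R : realType) (x y d m M : R) :
  between x y d -> m <= x <= M -> (x + m) / 2 <= d <= (x + M) / 2 ->
  (y + m) / 2 <= d <= (y + M) / 2.
Proof.
rewrite /between minEle maxEle => /andP[h1 h2] /andP[h3 h4] /andP[h5 h6].
by case: ifP h1 h2 => _ h1 h2; apply/andP; split; lra.
Qed.

Lemma dest_step (R : realType) (n f : nat) (byz : {set 'I_n})
    (pos : 'I_n -> R -> R) (L : 'I_n -> nat -> R) :
  (5 * f < n)%N -> (#|byz| <= f)%N ->
  forall j k (m Mx : R),
  (forall i, i \notin byz -> m <= pos i (L j k) <= Mx) ->
  m <= pos j (L j k) <= Mx ->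
  (pos j (L j k) + m) / 2 <= dest f pos L j k <= (pos j (L j k) + Mx) / 2.
Proof.
move=> hn hb j k m Mx hall hx.
rewrite /dest; apply: algo_bound => //.
- by rewrite /snapshot size_map size_enum_ord.
- lia.
- rewrite /snapshot count_map count_enum_card; apply: leq_trans hb.
  apply: subset_leq_card; apply/subsetP => i; rewrite !inE /=.
  apply: contraLR => /hall /andP[h _]; by rewrite -leNgt.
- rewrite /snapshot count_map count_enum_card; apply: leq_trans hb.
  apply: subset_leq_card; apply/subsetP => i; rewrite !inE /=.
  apply: contraLR => /hall /andP[_ h]; by rewrite -leNgt.
Qed.
Arguments dest_step {R n f byz pos L}.

Lemma all_good (R : realType) (n f : nat) (byz : {set 'I_n})
    (pos : 'I_n -> R -> R) (L M E : 'I_n -> nat -> R) (delta : 'I_n -> R) :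
  (5 * f < n)%N -> (#|byz| <= f)%N ->
  corda_exec f pos L M E byz delta ->
  forall (t0 m Mx : R), 0 <= t0 ->
  (forall i, i \notin byz -> m <= pos i t0 <= Mx) ->
  (forall i, i \notin byz -> m <= Dest f pos L i t0 <= Mx) ->
  forall j, j \notin byz -> forall k, t0 <= L j k ->
  m <= dest f pos L j k <= Mx.
Proof.
move=> hn hb H t0 m Mx ht0 hp0 hD0 j hj k hk.
pose bad i k := [&& i \notin byz, t0 <= L i k & ~~ (m <= dest f pos L i k <= Mx)].
case: (boolP (m <= dest f pos L j k <= Mx)) => // hnot; exfalso.
have hbad : bad j k by rewrite /bad hj hk hnot.
pose Pb i := `[< exists k, bad i k >].
pose kmin i := match pselect (exists k, bad i k) with
  | left p => ex_minn p | right _ => 0%N end.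
have kminP : forall i, Pb i -> bad i (kmin i) /\ forall k, bad i k -> (kmin i <= k)%N.
  move=> i /asboolP hi; rewrite /kmin; case: pselect => // p.
  by case: ex_minnP.
have Pj : Pb j by apply/asboolP; exists k.
case: (arg_minP (fun i => L i (kmin i)) Pj) => i0 Pi0 hmin.
have [bad0 _] := kminP i0 Pi0.
move: (bad0); rewrite /bad => /and3P[hi0 ht00 hnot0].
set T := L i0 (kmin i0).
have good : forall i, i \notin byz -> forall k, t0 <= L i k -> L i k < T ->
    m <= dest f pos L i k <= Mx.
  move=> i hi k' h1 h2; case: (boolP (m <= dest f pos L i k' <= Mx)) => // hn'.
  have hb' : bad i k' by rewrite /bad hi h1 hn'.
  have Pi : Pb i by apply/asboolP; exists k'.
  have [_ hle] := kminP i Pi.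
  have := hmin i Pi; have := Lmono H i hi _ _ (hle k' hb') => h3 h4.
  by have := lt_le_trans h2 (le_trans h4 h3); rewrite ltxx.
have hposT : forall i, i \notin byz -> m <= pos i T <= Mx.
  move=> i hi; apply: (posH H i hi t0 m Mx T) => //.
  - exact: hp0.
  - exact: hD0.
  - by move=> k' h1 h2; apply: good.
have := @dest_step R n f byz pos L hn hb i0 (kmin i0) m Mx hposT (hposT i0 hi0).
move: hnot0; rewrite -/T; move: (hposT i0 hi0).
set x := pos i0 T; set d := dest f pos L i0 (kmin i0).
move=> /andP[h1 h2] /negP hn0 /andP[h3 h4]; apply: hn0; apply/andP; split; lra.
Qed.
Arguments all_good {R n f byz pos L M E delta}.

Theorem lemma9 (R : realType) (n f : nat) (byz : {set 'I_n})
    (pos : 'I_n -> R -> R) (L M E : 'I_n -> nat -> R) (delta : 'I_n -> R) :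
  (5 * f < n)%N -> (#|byz| <= f)%N ->
  corda_exec f pos L M E byz delta ->
  forall t0 : R, 0 <= t0 ->
  forall (i : 'I_n), i \notin byz ->
  forall k : nat, t0 <= L i k ->
  forall t : R, L i k <= t -> t <= E i k ->
  (pos i t + seqmin (UD f pos L byz t0)) / 2 <= Dest f pos L i t
  <= (pos i t + seqmax (UD f pos L byz t0)) / 2.
Proof.
move=> hn hb H t0 ht0 i hi k hk t h1 h2.
set U := UD f pos L byz t0; set m := seqmin U; set Mx := seqmax U.
have memU : forall j, j \notin byz -> pos j t0 \in U /\ Dest f pos L j t0 \in U.
  move=> j hj; split; apply/flatten_mapP; exists j.
    1-4: by rewrite ?mem_enum ?in_setC ?hj ?inE ?eqxx ?orbT ?orTb.
have hp0 : forall j, j \notin byz -> m <= pos j t0 <= Mx.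
  move=> j hj; have [h _] := memU j hj.
  by rewrite /m /Mx /seqmin /seqmax bigmin_le ?bigmax_ge.
have hD0 : forall j, j \notin byz -> m <= Dest f pos L j t0 <= Mx.
  move=> j hj; have [_ h] := memU j hj.
  by rewrite /m /Mx /seqmin /seqmax bigmin_le ?bigmax_ge.
have good := all_good hn hb H t0 m Mx ht0 hp0 hD0.
have posAll : forall j, j \notin byz -> forall s, t0 <= s -> m <= pos j s <= Mx.
  move=> j hj s hs; apply: (posH H j hj t0 m Mx s) => //.
  - exact: hp0.
  - exact: hD0.
  - by move=> k' h h'; apply: good.
have [[_ hLME _] _] := H i hi.
have [hLM [hME hEL]] := hLME k.
have htL : t < L i k.+1 by apply: le_lt_trans h2 hEL.
rewrite (Dest_eq H i hi k t h1 htL).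
apply: final_alg (seg H i hi k _ _ (lexx _) h1 htL) (posAll i hi _ hk) _.
apply: (@dest_step R n f byz pos L hn hb) => //.
- by move=> j hj; apply: posAll.
- exact: posAll.
Qed.
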